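(* Let $W=L^a(RL)^{k_1}R(RL)^{k_2}R\cdots(RL)^{k_m}RL^b$ be a balanced word, where $a,b,m\ge 0$ are integers with $a+b=m$ and $k_i\ge 0$ for $1\le i\le m$. Then the elevation multiset of $W$ is the multiset union $$E(W)=\{0,-1,\dots,-a\}\cup\{0,1,\dots,b\}\cup\{(i-a)^{\mu_i}\}_{i=0}^m,$$ where the value $i-a$ appears with multiplicity $\mu_i$ in the last part, with $\mu_0=k_1$, $\mu_i=k_i+1+k_{i+1}$ for $1\le i\le m-1$, and $\mu_m=k_m$.
   Context: Words are finite products of the letters $L,R$. A word is balanced if it contains equally many $L$'s and $R$'s. For a balanced word $W=a_1\cdots a_n$ and $0\le k\le n$, $e_k(W)=\sum_{i=1}^k\overline{a_i}$ with $\overline{R}=1$, $\overline{L}=-1$; the elevation multiset $E(W)$ is the multiset $\{e_0(W),\dots,e_n(W)\}$. The notation $x^\mu$ denotes the value $x$ with multiplicity $\mu$, and $\cup$ denotes multiset union (multiplicities add). *)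

(* Defs.v *)
From HB Require Import structures.
From mathcomp Require Import all_boot all_order all_algebra.
Set Implicit Arguments. Unset Strict Implicit. Unset Printing Implicit Defensive.
Import GRing.Theory Num.Theory.
Local Open Scope ring_scope.

Inductive letter := L | R.
Definition letter_eqb (x y : letter) : bool :=
  match x, y with L, L | R, R => true | _, _ => false end.
Lemma letter_eqP : Equality.axiom letter_eqb.
Proof. by case; case; constructor. Qed.
HB.instance Definition _ := hasDecEq.Build letter letter_eqP.

Definition word := seq letter.

Definition lbar (x : letter) : int := if x is R then 1 else -1.

Definition balanced (W : word) : bool := count_mem L W == count_mem R W.

Definition elev (W : word) (k : nat) : int := \sum_(x <- take k W) lbar x.

(* The elevation multiset {e_0(W), ..., e_n(W)}, as a list up to permutation. *)
Definition elevations (W : word) : seq int := [seq elev W k | k <- iota 0 (size W).+1].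

Definition wordW (a b m : nat) (k : nat -> nat) : word :=
  nseq a L ++ flatten [seq flatten (nseq (k i) [:: R; L]) ++ [:: R] | i <- iota 1 m]
  ++ nseq b L.

Definition mu (m : nat) (k : nat -> nat) (i : nat) : nat :=
  if i == 0%N then k 1%N
  else if i == m then k m
  else (k i + 1 + k i.+1)%N.

Definition elev_formula (a b m : nat) (k : nat -> nat) : seq int :=
  [seq - (i%:Z) | i <- iota 0 a.+1] ++ [seq i%:Z | i <- iota 0 b.+1]
  ++ flatten [seq nseq (mu m k i) (i%:Z - a%:Z) | i <- iota 0 m.+1].

(* Main.v *)
Require Import Defs.
From mathcomp Require Import all_boot all_order all_algebra.
From mathcomp Require Import zify.
Import GRing.Theory Num.Theory.
Local Open Scope ring_scope.

Fixpoint evt (h : int) (w : word) : seq int :=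
  if w is x :: s then (h + lbar x) :: evt (h + lbar x) s else [::].

Definition tot (w : word) : int := \sum_(x <- w) lbar x.

Lemma tot_cons x w : tot (x :: w) = lbar x + tot w.
Proof. by rewrite /tot big_cons. Qed.

Lemma tot_cat u v : tot (u ++ v) = tot u + tot v.
Proof. by rewrite /tot big_cat. Qed.

Lemma evt_cat h u v : evt h (u ++ v) = evt h u ++ evt (h + tot u) v.
Proof.
elim: u h => [|x u IH] h /=; first by rewrite /tot big_nil addr0.
by rewrite IH tot_cons addrA.
Qed.

Lemma iota_S m n : iota m.+1 n = map S (iota m n).
Proof. by elim: n m => [|n IH] m //=; rewrite IH. Qed.

Lemma elev_evt W h :
  [seq h + elev W k | k <- iota 0 (size W).+1] = h :: evt h W.
Proof.
elim: W h => [|x W IH] h; first by rewrite /= /elev /= big_nil addr0.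
rewrite [size _]/= (_ : iota 0 (size W).+2 = 0%N :: map S (iota 0 (size W).+1)); last by rewrite -iota_S.
rewrite map_cons -map_comp (_ : elev (x :: W) 0 = 0); last by rewrite /elev /= big_nil.
rewrite addr0 [evt h (x :: W)]/= -(IH (h + lbar x)); congr (_ :: _).
apply: eq_map => i /=; by rewrite /elev /= big_cons addrA.
Qed.

Lemma elevations_evt W : elevations W = 0 :: evt 0 W.
Proof.
rewrite /elevations -elev_evt; apply: eq_map => i; by rewrite add0r.
Qed.

Lemma evt_nseqL (h : int) j n :
  evt (h - j%:Z) (nseq n L) = [seq h - i%:Z | i <- iota j.+1 n].
Proof.
elim: n j => [|n IH] j //=.
have -> : h - j%:Z + lbar L = h - (j.+1)%:Z by rewrite /=; lia.
by rewrite IH.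
Qed.

Lemma tot_nseqL n : tot (nseq n L) = - n%:Z.
Proof. elim: n => [|n IH]; first by rewrite /tot big_nil. 
rewrite /= tot_cons IH /=; lia. Qed.

Definition RLs n : word := flatten (nseq n [:: R; L]).

Lemma evt_RLs h n : evt h (RLs n) = flatten (nseq n [:: h + 1; h]).
Proof.
elim: n => [|n IH] //=.
by rewrite /= addrK IH.
Qed.

Lemma tot_RLs n : tot (RLs n) = 0.
Proof. elim: n => [|n IH]; first by rewrite /tot big_nil.
rewrite /RLs /= !tot_cons. rewrite /RLs in IH; rewrite IH /=; lia. Qed.

Lemma perm_flat2 (T : eqType) n (x y : T) :
  perm_eq (flatten (nseq n [:: x; y])) (nseq n x ++ nseq n y).
Proof.
elim: n => [|n IH] //=.
move/permP: IH => IH; apply/permP => p.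
rewrite /= IH !count_cat /=; lia.
Qed.

Definition blk (k : nat -> nat) i : word := RLs (k i) ++ [:: R].
Definition Bl k j n : word := flatten [seq blk k i | i <- iota j n].

Lemma tot_blk k i : tot (blk k i) = 1.
Proof. by rewrite /blk tot_cat tot_RLs tot_cons /tot big_nil. Qed.

Lemma tot_Bl k j n : tot (Bl k j n) = n%:Z.
Proof.
elim: n j => [|n IH] j; first by rewrite /Bl /tot /= big_nil.
rewrite /Bl /= tot_cat tot_blk. rewrite /Bl in IH; rewrite IH; lia.
Qed.

Lemma Bl_evt k (h : int) j n :
  perm_eq (evt (h + j%:Z) (Bl k j n))
    ([seq h + (i.+1)%:Z | i <- iota j n] ++
     flatten [seq nseq (k i) (h + i%:Z) ++ nseq (k i) (h + (i.+1)%:Z) | i <- iota j n]).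
Proof.
elim: n j => [|n IH] j //.
rewrite (_ : Bl k j n.+1 = blk k j ++ Bl k j.+1 n) // evt_cat tot_blk.
rewrite /blk evt_cat tot_RLs evt_RLs addr0 /=.
have E : h + j%:Z + 1 = h + (j.+1)%:Z by lia.
rewrite E.
move/permP: (IH j.+1) => IH'.
have F := permP (perm_flat2 _ (k j) (h + (j.+1)%:Z) (h + j%:Z)).
apply/permP => p.
rewrite count_cat IH' count_cat F /= !count_cat; lia.
Qed.

Lemma flat_cat_map {T : eqType} {S : Type} (f g : S -> seq T) s :
  perm_eq (flatten [seq f i ++ g i | i <- s]) (flatten (map f s) ++ flatten (map g s)).
Proof.
elim: s => [|x s IH] //=; move/permP: IH => IH; apply/permP => p.
rewrite !count_cat IH !count_cat; lia.
Qed.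

Lemma fcons (T : Type) (x : seq T) s : flatten (x :: s) = x ++ flatten s.
Proof. by []. Qed.

Lemma flat1 (T S : Type) (c : S -> T) s : flatten [seq [:: c i] | i <- s] = map c s.
Proof. by elim: s => [|x s IH] //=; rewrite IH. Qed.

Lemma FC_lem (T : Type) (c : nat -> T) m' :
  flatten [seq nseq (if (0 < i < m'.+1)%N then 1%N else 0%N) (c i) | i <- iota 0 m'.+2]
  = [seq c i | i <- iota 1 m'].
Proof.
rewrite (_ : iota 0 m'.+2 = 0%N :: (iota 1 m' ++ [:: m'.+1])); last first.
  by rewrite -addn1 iotaD.
rewrite map_cons fcons map_cat flatten_cat /= ltnn /= cats0.
rewrite -[RHS]flat1; congr flatten; apply/eq_in_map => i.
rewrite mem_iota => /andP[h1 h2]; rewrite h1 /=; have -> : (i < m'.+1)%N by lia.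
done.
Qed.

Lemma mu_split (T : eqType) (c : nat -> T) m k : (1 <= m)%N ->
  perm_eq (flatten [seq nseq (mu m k i) (c i) | i <- iota 0 m.+1])
    (flatten [seq nseq (k i) (c i.-1) | i <- iota 1 m] ++
     flatten [seq nseq (k i) (c i) | i <- iota 1 m] ++
     [seq c i | i <- iota 1 m.-1]).
Proof.
move=> m1.
pose A i := if i == 0%N then 0%N else k i.
pose B i := if (i < m)%N then k i.+1 else 0%N.
pose C i := if (0 < i < m)%N then 1%N else 0%N.
have E : [seq nseq (mu m k i) (c i) | i <- iota 0 m.+1] =
  [seq nseq (A i) (c i) ++ (nseq (B i) (c i) ++ nseq (C i) (c i)) | i <- iota 0 m.+1].
  apply/eq_in_map => i; rewrite mem_iota => /andP[_ hi]; rewrite -!nseqD; congr nseq.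
  rewrite /mu /A /B /C; case: i hi => [|i] hi /=.
    by rewrite m1 add0n addn0.
  case: eqP => [e|ne].
    by rewrite e ltnn !addn0.
  have -> : (i.+1 < m)%N by lia.
  lia.
rewrite E.
apply: perm_trans (flat_cat_map (fun i => nseq (A i) (c i)) (fun i => nseq (B i) (c i) ++ nseq (C i) (c i)) (iota 0 m.+1)) _.
have FA : flatten [seq nseq (A i) (c i) | i <- iota 0 m.+1] =
          flatten [seq nseq (k i) (c i) | i <- iota 1 m].
  rewrite (_ : iota 0 m.+1 = 0%N :: iota 1 m) // map_cons fcons cat0s.
  congr flatten; apply/eq_in_map => i.
  by rewrite mem_iota /A; case: i.
have FB : flatten [seq nseq (B i) (c i) | i <- iota 0 m.+1] =
          flatten [seq nseq (k i) (c i.-1) | i <- iota 1 m].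
  rewrite -addn1 iotaD map_cat flatten_cat /= {2}/B ltnn /= cats0 iota_S -map_comp.
  congr flatten; apply/eq_in_map => i.
  by rewrite mem_iota /B /= => ->.
have FC : flatten [seq nseq (C i) (c i) | i <- iota 0 m.+1] = [seq c i | i <- iota 1 m.-1].
  rewrite /C; clear A B C E FA FB; case: m m1 => [|m'] // _.
  exact: FC_lem.
have P : perm_eq (flatten [seq nseq (B i) (c i) ++ nseq (C i) (c i) | i <- iota 0 m.+1])
  (flatten [seq nseq (B i) (c i) | i <- iota 0 m.+1] ++ flatten [seq nseq (C i) (c i) | i <- iota 0 m.+1]).
  exact: flat_cat_map.
rewrite FB FC in P; move/permP: P => P.
apply/permP => p; rewrite count_cat FA P !count_cat; lia.
Qed.

Lemma rev_perm (x : int) n :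
  perm_eq [seq x - i%:Z | i <- iota 1 n] [seq x - n%:Z + i%:Z | i <- iota 0 n].
Proof.
elim: n x => [|n IH] x //.
rewrite (_ : iota 1 n.+1 = 1%N :: map S (iota 1 n)); last by rewrite -iota_S.
rewrite map_cons -map_comp.
have E1 : [seq ((fun i : nat => x - i%:Z) \o succn) i | i <- iota 1 n] =
          [seq (x - 1) - i%:Z | i <- iota 1 n].
  apply: eq_map => i /=; lia.
rewrite E1 (_ : iota 0 n.+1 = iota 0 n ++ [:: n]); last by rewrite -addn1 iotaD.
rewrite map_cat.
have E2 : [seq x - (n.+1)%:Z + i%:Z | i <- iota 0 n] = [seq x - 1 - n%:Z + i%:Z | i <- iota 0 n].
  apply: eq_map => i /=; lia.
rewrite E2.
have H := permP (IH (x - 1)).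
apply/permP => p; rewrite /= H count_cat /=.
have -> : x - (n.+1)%:Z + n%:Z = x - 1 by lia.
by rewrite addn0 addnC.
Qed.

Theorem lemma6p5 (a b m : nat) (k : nat -> nat) :
  (1 <= m)%N -> (a + b)%N = m -> balanced (wordW a b m k) ->
  perm_eq (elevations (wordW a b m k)) (elev_formula a b m k).
Proof.
move=> m1 hab _.
pose c i := i%:Z - a%:Z.
have Zs : [seq c i | i <- iota 1 m] = [seq c i | i <- iota 1 m.-1] ++ [:: b%:Z].
  move: m1 hab; case: m => [|m'] // _ hab.
  rewrite (_ : iota 1 m'.+1 = iota 1 m' ++ [:: m'.+1]); last by rewrite -{1}[m'.+1]addn1 iotaD add1n.
  rewrite map_cat /=; congr (_ ++ [:: _]); rewrite /c; lia.
rewrite elevations_evt.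
have EW : wordW a b m k = nseq a L ++ Bl k 1 m ++ nseq b L by [].
rewrite EW !evt_cat tot_nseqL tot_Bl.
have EA : evt 0 (nseq a L) = [seq 0 - i%:Z | i <- iota 1 a] by rewrite -(evt_nseqL 0 0) subr0.
have EC : evt (0 + - a%:Z + m%:Z) (nseq b L) = [seq b%:Z - i%:Z | i <- iota 1 b].
  rewrite -(evt_nseqL b 0); congr evt; rewrite -hab; lia.
rewrite EA EC.
set h : int := - (a%:Z) - 1.
have EB0 : 0 + - a%:Z = h + (1%N)%:Z by rewrite /h; lia.
rewrite EB0.
have PB := Bl_evt k h 1 m.
have Bp : [seq h + (i.+1)%:Z | i <- iota 1 m] = [seq c i | i <- iota 1 m].
  by apply: eq_map => i; rewrite /h /c; lia.
rewrite Bp Zs in PB.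
have Fl : perm_eq (flatten [seq nseq (k i) (h + i%:Z) ++ nseq (k i) (h + (i.+1)%:Z) | i <- iota 1 m])
   (flatten [seq nseq (k i) (c i.-1) | i <- iota 1 m] ++ flatten [seq nseq (k i) (c i) | i <- iota 1 m]).
  have -> : [seq nseq (k i) (h + i%:Z) ++ nseq (k i) (h + (i.+1)%:Z) | i <- iota 1 m] =
            [seq nseq (k i) (c i.-1) ++ nseq (k i) (c i) | i <- iota 1 m].
    apply/eq_in_map => i; rewrite mem_iota => /andP[h1 _].
    case: i h1 => [|i] //= _; rewrite /h /c; congr (nseq _ _ ++ nseq _ _); lia.
  exact: flat_cat_map.
have Mu := mu_split _ c m k m1.
have Rv := rev_perm b b.
have ER : [seq b%:Z - b%:Z + i%:Z | i <- iota 0 b] = [seq i%:Z | i <- iota 0 b].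
  by apply: eq_map => i; lia.
rewrite ER in Rv.
rewrite /elev_formula.
have EF1 : [seq - (i%:Z) | i <- iota 0 a.+1] = 0 :: [seq 0 - i%:Z | i <- iota 1 a].
  rewrite [iota 0 a.+1]/= map_cons; congr (_ :: _); apply: eq_map => i; lia.
have EF2 : [seq i%:Z | i <- iota 0 b.+1] = [seq i%:Z | i <- iota 0 b] ++ [:: b%:Z].
  by rewrite -[b.+1]addn1 iotaD map_cat.
rewrite EF1 EF2.
move/permP: PB => PB; move/permP: Fl => Fl; move/permP: Mu => Mu; move/permP: Rv => Rv.
apply/permP => p.
rewrite /= !count_cat PB !count_cat Fl !count_cat Rv.
move: (Mu p); rewrite /= /c count_cat => ->; rewrite !count_cat /c !addn0; congr (_ + (_ + _)).
set u1 := count p [seq (i%:Z - a%:Z) | i <- iota 1 m.-1].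
set u2 := count p (flatten [seq nseq (k i) (i.-1%:Z - a%:Z) | i <- iota 1 m]).
set u3 := count p (flatten [seq nseq (k i) (i%:Z - a%:Z) | i <- iota 1 m]).
set u4 := count p [seq i%:Z | i <- iota 0 b].
set u5 := nat_of_bool (p b).
clearbody u1 u2 u3 u4 u5; lia.
Qed.
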